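(* In the model described in the context, if all high-level operations are totally ordered and $\tau\ge 3f+1$, then Algorithm 1 with threshold $t=f+1$ satisfies both completeness and strong accuracy.
   Context: Model. An asynchronous system has client processes (writers, readers, auditors) and $n$ storage objects $o_1,\dots,o_n$. Each $o_k$ is a linearisable loggable read/write register with a log $L_k$ (initially empty). Its rw-write($b$) stores a block; rw-read() returns the current block and appends $\langle p_r,\mathit{label}(b)\rangle$ to $L_k$, where $p_r$ is the reader and $\mathit{label}(b)$ identifies the value from which $b$ was derived; rw-getLog() returns $L_k$. A register over values $\mathbb{V}$ is emulated by information dispersal. An a-write($v$) encodes $v$ into $b_{v_1},\dots,b_{v_n}$ with $b_{v_k}$ sent to $o_k$. Any $\tau$ distinct blocks of $v$ recover $v$, and fewer do not. Total order: all high-level operations are serialised via total order broadcast and executed sequentially, so objects hold blocks of a single value. Faults. Writers and auditors can only crash. Faulty readers may crash or contact a subset of objects. At most $f$ objects are faulty; a faulty object may crash, omit its block, omit log records from auditors, and report records of nonexistent reads. Providing set $P_{p_r,v}$: the set of objects that received a write of $b_{v_k}$ and responded $b_{v_k}$ to a read of $p_r$. The value $v$ is effectively read by $p_r$ iff $|P_{p_r,v}|\ge\tau$. Algorithm 1 (a-audit with threshold $t$): 1. Invoke rw-getLog on all $n$ objects in parallel, and wait for responses from at least $n-f$; let $L[k]$ be the log received from $o_k$. 2. For every record $\langle p_r,\mathit{label}(v)\rangle$ in some $L[k]$, let $\mathcal{E}_{p_r,v}=\{k:\langle p_r,\mathit{label}(v)\rangle\in L[k]\}$, and add it to $E_A$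 iff $|\mathcal{E}_{p_r,v}|\ge t$. 3. Return $E_A$. Completeness: $|P_{p_r,v}|\ge\tau$ before the audit implies $\mathcal{E}_{p_r,v}\in E_A$. Strong accuracy: for every correct reader $p_r$ and every value $v$, $|P_{p_r,v}|<\tau$ before the audit implies $\mathcal{E}_{p_r,v}\notin E_A$. *)

(* Defs.v *)
(* Abstract model of the auditable information-dispersal
   register of the paper, with all high-level operations totally ordered
   (executed sequentially, each operation atomically w.r.t. the objects). *)
From Stdlib Require Import List.
From mathcomp Require Import all_boot.
Set Implicit Arguments. Unset Strict Implicit. Unset Printing Implicit Defensive.

Inductive hop (Reader V : Type) := AWrite of V | ARead of Reader.
Arguments AWrite {Reader V}.
Arguments ARead {Reader V}.

(* One high-level operation executed in the total order.
   - s_reach : the objects o_k at which the low-level operation took effect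
       (for a-write(v): o_k stored b_{v_k}; for a read: o_k executed rw-read)
   - s_resp  : for a read, the objects that returned their current block
       to the reader (a faulty object may omit it). *)
Record step (n : nat) (Reader V : Type) := Step {
  s_op : hop Reader V;
  s_reach : {set 'I_n};
  s_resp : {set 'I_n} }.

Definition exec (n : nat) (Reader V : Type) := seq (step n Reader V).

Section Model.
Variables (n : nat) (Reader V : eqType).
Implicit Types (e : exec n Reader V) (k : 'I_n) (p : Reader) (v : V).

Definition indexed e : seq (nat * step n Reader V) := zip (iota 0 (size e)) e.

(* Value from which the block held by o_k just before step i was derived
   (None = initial, no block written yet). *)
Definition held e k (i : nat) : option V :=
  foldl (fun acc s => if s_op s is AWrite v then
                        (if k \in s_reach s then Some v else acc)
                      else acc) None (take i e).

(* The (true) log L_k of object o_k after e: each rw-read executed on o_k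
   appends <p_r, label(b)> where b is its current block. *)
Definition honest_log e k : seq (Reader * V) :=
  flatten [seq (if s_op ix.2 is ARead p then
                  (if k \in s_reach ix.2 then
                     (if held e k ix.1 is Some v then [:: (p, v)] else [::])
                   else [::])
                else [::]) | ix <- indexed e].

Definition providing e p v : {set 'I_n} :=
  [set k | has (fun ix => if s_op ix.2 is ARead q then
                  [&& q == p, k \in s_reach ix.2, k \in s_resp ix.2
                    & held e k ix.1 == Some v]
                else false) (indexed e)].

Definition well_formed (F : {set 'I_n}) (correctR : pred Reader) e : Prop :=
  [/\ (* total order: the (correct) objects hold blocks of a single value *)
      forall i k1 k2, k1 \notin F -> k2 \notin F -> held e k1 i = held e k2 i,
      forall s p, In s e -> s_op s = ARead p ->
        forall k, k \notin F -> k \in s_reach s -> k \in s_resp s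
    &
      forall s p, In s e -> s_op s = ARead p -> correctR p ->
        forall k, k \notin F -> k \in s_reach s].

(* Responses to the audit's rw-getLog: R = objects that answered (at least
   n - f), L k = log received from o_k. Correct objects return their true
   log; faulty objects may return anything (omit or invent records). *)
Definition valid_audit (f : nat) (F : {set 'I_n}) e
    (R : {set 'I_n}) (L : 'I_n -> seq (Reader * V)) : Prop :=
  n - f <= #|R| /\ forall k, k \in R -> k \notin F -> L k = honest_log e k.

Definition evidence (R : {set 'I_n}) (L : 'I_n -> seq (Reader * V)) p v
  : {set 'I_n} := [set k in R | (p, v) \in L k].

(* \mathcal{E}_{p,v} \in E_A for Algorithm 1 with threshold t: the record
   occurs in some L[k] and |\mathcal{E}_{p,v}| >= t. *)
Definition audit_reports (t : nat) (R : {set 'I_n})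
    (L : 'I_n -> seq (Reader * V)) p v : bool :=
  (0 < #|evidence R L p v|) && (t <= #|evidence R L p v|).

Definition completeness (tau t : nat) e R L : Prop :=
  forall p v, tau <= #|providing e p v| -> audit_reports t R L p v.

Definition strong_accuracy (tau t : nat) (correctR : pred Reader) e R L
  : Prop :=
  forall p v, correctR p -> #|providing e p v| < tau ->
    ~~ audit_reports t R L p v.

End Model.

(* Main.v *)
Require Import Defs.
From mathcomp Require Import all_boot.
From Stdlib Require List.
From mathcomp Require Import zify.

Lemma has_In (T : Type) (a : pred T) (s : seq T) :
  has a s -> exists x, List.In x s /\ a x.
Proof.
elim: s => //= x s IH /orP [H|H]; first by exists x; auto.
by case: (IH H) => y [Hy Hay]; exists y; auto.
Qed.

Lemma In_has (T : Type) (a : pred T) (s : seq T) x :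
  List.In x s -> a x -> has a s.
Proof.
elim: s => //= y s IH [<-|H] Ha; first by rewrite Ha.
by rewrite (IH H Ha) orbT.
Qed.

Lemma mem_flatten_map (T : Type) (U : eqType) (g : T -> seq U) (s : seq T) u :
  (u \in flatten (map g s)) = has (fun x => u \in g x) s.
Proof. by elim: s => //= x s IH; rewrite mem_cat IH. Qed.

Lemma In_zip_r (A B : Type) (s : seq A) (t : seq B) a b :
  List.In (a, b) (zip s t) -> List.In b t.
Proof.
elim: s t => [|x s IH] [|y t] //= [H|H].
  by case: H => _ ->; left.
by right; apply: (IH t).
Qed.

Arguments has_In [T a s].
Arguments In_has [T a s x].
Arguments In_zip_r [A B s t a b].

Lemma card_le3 (n : nat) (A B C D : {set 'I_n}) :
  A \subset B :|: C :|: D -> #|A| <= #|B| + #|C| + #|D|.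
Proof.
move=> /subset_leq_card H.
have := cardsU (B :|: C) D. have := cardsU B C. lia.
Qed.

Arguments card_le3 [n A B C D].

Theorem theorem5 (n f tau : nat) (Reader V : eqType)
    (F : {set 'I_n}) (correctR : pred Reader) (e : exec n Reader V)
    (R : {set 'I_n}) (L : 'I_n -> seq (Reader * V)) :
  #|F| <= f ->
  3 * f + 1 <= tau ->
  tau + f <= n ->
  well_formed F correctR e ->
  valid_audit f F e R L ->
  completeness tau (f + 1) e R L /\
  strong_accuracy tau (f + 1) correctR e R L.
Proof.
move=> HF Htau Hn [Hheld Hresp Hreach] [HR HL].
have cR := cardsC R. have cF := cardsC F. rewrite card_ord in cR cF.
split.
- move=> p v Hp.
  set S := providing e p v :&: R :&: ~: F.
  have Hsub : S \subset evidence R L p v.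
    apply/subsetP => k; rewrite !inE => /andP [/andP [Hk HkR] HkF].
    rewrite HkR /= HL //= /honest_log mem_flatten_map.
    apply: sub_has Hk => ix /=; case: (s_op ix.2) => // q.
    case/and4P => /eqP -> -> _ /eqP -> ; by rewrite inE.
  have HS : providing e p v \subset S :|: ~: R :|: F.
    apply/subsetP => k Hk; rewrite !in_setU !in_setI in_setC Hk /=.
    by rewrite in_setC; case: (k \in R); case: (k \in F); rewrite ?orbT.
  have := card_le3 HS. have := subset_leq_card Hsub.
  rewrite /audit_reports. move=> H1 H2.
  apply/andP; split; lia.
- move=> p v Hcp Hp.
  have Hsub : evidence R L p v \subset F.
    apply/subsetP => k; rewrite inE => /andP [HkR Hin].
    apply/negPn/negP => HkF.
    move: Hin; rewrite HL // /honest_log mem_flatten_map => /has_In [ix [Hix]].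
    case Hop: (s_op ix.2) => [|q] //.
    case Hk: (k \in s_reach ix.2) => //.
    case Hh: (held e k ix.1) => [w|] //; rewrite inE => /eqP [Hq Hw].
    subst q w.
    have Hin2 : List.In ix.2 e.
      by move: Hix; case: ix {Hop Hk Hh} => a b Hab; exact: (In_zip_r Hab).
    have : ~: F \subset providing e p v.
      apply/subsetP => k'; rewrite inE => Hk'.
      rewrite inE; apply: (In_has Hix); rewrite Hop eqxx /=.
      have Hr := Hreach _ _ Hin2 Hop Hcp _ Hk'.
      by rewrite Hr (Hresp _ _ Hin2 Hop _ Hk' Hr) (Hheld _ k' k Hk' HkF) Hh eqxx.
    move/subset_leq_card; lia.
  have := subset_leq_card Hsub; rewrite /audit_reports; lia.
Qed.
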